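(* Let $G=\{\alpha_t: t\in\mathbb{N}\}$ be a subgroup of $\mathbb{T}$ and let $(M_t)_{t\in\mathbb{N}}$ be a sequence of positive integers. Then there exists a sequence $(V_t)_{t\in\mathbb{N}}$ of open subsets of $\mathbb{T}$ such that (i) $V_t\supseteq\langle\alpha_1,\ldots,\alpha_t\rangle_{M_t}$ for all $t\in\mathbb{N}$, and (ii) $\bigcup_{k\in\mathbb{N}}\bigcap_{t\ge k}V_t = G$.
   Context: $\mathbb{T}=\mathbb{R}/\mathbb{Z}$. For $M\in\mathbb{N}$, $\langle\alpha_1,\ldots,\alpha_t\rangle_M=\{k_1\alpha_1+\cdots+k_t\alpha_t: k_i\in\mathbb{Z},\ |k_1|,\ldots,|k_t|\le M\}$. *)

(* Defs.v *)
(* the circle T = R/Z is modelled by real representatives;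
   a subset of T is a Z-periodic subset of R, open in T iff open in R. *)
From Stdlib Require Import Reals ZArith.
From Stdlib Require Export Rtopology.
Open Scope R_scope.

Definition Zperiodic (V : R -> Prop) : Prop :=
  forall (x : R) (k : Z), V x <-> V (x + IZR k).

Definition in_G (alpha : nat -> R) (x : R) : Prop :=
  exists t : nat, (1 <= t)%nat /\ exists k : Z, x = alpha t + IZR k.

Definition is_subgroup_T (alpha : nat -> R) : Prop :=
  in_G alpha 0 /\
  forall x y, in_G alpha x -> in_G alpha y -> in_G alpha (x - y).

Fixpoint lin_comb (k : nat -> Z) (alpha : nat -> R) (t : nat) : R :=
  match t with
  | O => 0
  | S t' => lin_comb k alpha t' + IZR (k t) * alpha t
  end.

Definition in_bounded_span (alpha : nat -> R) (t M : nat) (x : R) : Prop :=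
  exists k : nat -> Z,
    (forall i, (1 <= i <= t)%nat -> (Z.abs (k i) <= Z.of_nat M)%Z) /\
    x = lin_comb k alpha t.

(* Main.v *)
Require Import Defs.
From Stdlib Require Import Reals ZArith Lra Lia List ClassicalEpsilon.
Open Scope R_scope.

Lemma in_G_shift a x m : in_G a x -> in_G a (x + IZR m).
Proof. intros [t [Ht [k Hk]]]. exists t; split; auto. exists (k + m)%Z.
  rewrite plus_IZR; subst; ring. Qed.

Section G.
Variable a : nat -> R.
Hypothesis HG : is_subgroup_T a.

Lemma in_G_opp x : in_G a x -> in_G a (- x).
Proof. intros H. replace (-x) with (0 - x) by ring. apply HG; auto. apply HG. Qed.

Lemma in_G_add x y : in_G a x -> in_G a y -> in_G a (x + y).
Proof. intros H1 H2. replace (x+y) with (x - (0 - y)) by ring. apply HG; auto.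
  apply HG; auto. apply HG. Qed.

Lemma in_G_nmul x n : in_G a x -> in_G a (INR n * x).
Proof. intros H. induction n. simpl. rewrite Rmult_0_l. apply HG.
  rewrite S_INR. replace ((INR n + 1) * x) with (INR n * x + x) by ring.
  apply in_G_add; auto. Qed.

Lemma in_G_zmul x c : in_G a x -> in_G a (IZR c * x).
Proof. intros H. destruct (Z_le_gt_dec 0 c).
  - rewrite <- (Z2Nat.id c) by lia. rewrite <- INR_IZR_INZ. apply in_G_nmul; auto.
  - replace c with (- (Z.of_nat (Z.to_nat (- c))))%Z by lia.
    rewrite opp_IZR, <- INR_IZR_INZ. replace (- INR (Z.to_nat (- c)) * x) with (- (INR (Z.to_nat (- c)) * x)) by ring.
    apply in_G_opp, in_G_nmul; auto. Qed.

Lemma lin_comb_in_G k t : in_G a (lin_comb k a t).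
Proof. induction t; simpl. apply HG. apply in_G_add; auto. apply in_G_zmul.
  exists (S t). split. lia. exists 0%Z. ring. Qed.
End G.

Lemma lin_comb_ext k k' a t : (forall i, (1 <= i <= t)%nat -> k i = k' i) ->
  lin_comb k a t = lin_comb k' a t.
Proof. induction t; intros H; simpl; auto. rewrite IHt by (intros; apply H; lia).
  rewrite H by lia. reflexivity. Qed.

Lemma lin_comb_tail k a t d : (forall i, (t < i <= t + d)%nat -> k i = 0%Z) ->
  lin_comb k a (t + d) = lin_comb k a t.
Proof. induction d; intros H. rewrite Nat.add_0_r; auto.
  rewrite Nat.add_succ_r. simpl. rewrite IHd by (intros; apply H; lia).
  rewrite H by lia. simpl; ring. Qed.

Lemma span_mono a t N t' N' x : in_bounded_span a t N x -> (N <= N')%nat -> (t <= t')%nat ->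
  in_bounded_span a t' N' x.
Proof. intros [k [Hk Hx]] HN Ht.
  exists (fun i => if Nat.leb i t then k i else 0%Z). split.
  - intros i Hi. destruct (Nat.leb i t) eqn:E. apply Nat.leb_le in E.
    specialize (Hk i ltac:(lia)). lia. simpl. lia.
  - replace t' with (t + (t' - t))%nat by lia. rewrite lin_comb_tail.
    + subst. apply lin_comb_ext. intros i Hi. destruct (Nat.leb i t) eqn:E; auto.
      apply Nat.leb_gt in E; lia.
    + intros i Hi. destruct (Nat.leb i t) eqn:E; auto. apply Nat.leb_le in E; lia.
Qed.

Lemma span_single a s t N : (1 <= s <= t)%nat -> (1 <= N)%nat -> in_bounded_span a t N (a s).
Proof. intros Hs HN. exists (fun i => if Nat.eqb i s then 1%Z else 0%Z). split.
  - intros i _. destruct (Nat.eqb i s); simpl; lia.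
  - replace t with (s + (t - s))%nat by lia. rewrite lin_comb_tail.
    + destruct s. lia. simpl. rewrite Nat.eqb_refl.
      replace (lin_comb _ a s) with (lin_comb (fun _ => 0%Z) a s).
      * assert (forall u, lin_comb (fun _ => 0%Z) a u = 0) as Z0.
        { induction u; simpl; auto. rewrite IHu; ring. }
        rewrite Z0. ring.
      * apply lin_comb_ext. intros i Hi. destruct (Nat.eqb i (S s)) eqn:E; auto.
        apply Nat.eqb_eq in E; lia.
    + intros i Hi. destruct (Nat.eqb i s) eqn:E; auto. apply Nat.eqb_eq in E; lia.
Qed.
Definition zrange (N : nat) : list Z :=
  map (fun n => (Z.of_nat n - Z.of_nat N)%Z) (seq 0 (2 * N + 1)).

Lemma zrange_in N c : (Z.abs c <= Z.of_nat N)%Z -> In c (zrange N).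
Proof. intros H. unfold zrange. apply in_map_iff. exists (Z.to_nat (c + Z.of_nat N)).
  split. rewrite Z2Nat.id by lia. lia. apply in_seq. lia. Qed.

Lemma span_finite a t N : exists l, forall x, in_bounded_span a t N x -> In x l.
Proof. induction t.
  - exists (0 :: nil). intros x [k [_ Hx]]. simpl in Hx. left; auto.
  - destruct IHt as [l Hl].
    exists (flat_map (fun s => map (fun c => s + IZR c * a (S t)) (zrange N)) l).
    intros x [k [Hk Hx]]. apply in_flat_map. exists (lin_comb k a t). split.
    + apply Hl. exists k. split; auto. intros; apply Hk; lia.
    + apply in_map_iff. exists (k (S t)). split. simpl in Hx; auto.
      apply zrange_in. apply Hk. lia.
Qed.

Lemma sep_single y : (exists n, y = IZR n) \/ exists d, 0 < d /\ forall m, d <= Rabs (y - IZR m).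
Proof. destruct (archimed y) as [H1 H2]. set (u := up y) in *.
  destruct (Req_dec (IZR u - y) 1) as [E|E].
  - left. exists (u - 1)%Z. rewrite minus_IZR. lra.
  - right. exists (Rmin (IZR u - y) (1 - (IZR u - y))). split.
    + apply Rmin_glb_lt; lra.
    + intros m. destruct (Z_le_gt_dec u m) as [L|L].
      * apply IZR_le in L. eapply Rle_trans. apply Rmin_l.
        rewrite Rabs_minus_sym. rewrite Rabs_right; lra.
      * assert (IZR m <= IZR u - 1). { rewrite <- minus_IZR. apply IZR_le. lia. }
        eapply Rle_trans. apply Rmin_r. rewrite Rabs_right; lra.
Qed.

Lemma sep_list l : exists d, 0 < d /\ forall y, In y l ->
  (exists n, y = IZR n) \/ forall m, d <= Rabs (y - IZR m).
Proof. induction l as [|y l IH].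
  - exists 1. split. lra. intros y [].
  - destruct IH as [d [Hd H]]. destruct (sep_single y) as [Hy|[e [He Hy]]].
    + exists d. split; auto. intros z [<-|Hz]; auto.
    + exists (Rmin d e). split. apply Rmin_glb_lt; auto.
      intros z [<-|Hz].
      * right. intros m. eapply Rle_trans. apply Rmin_r. auto.
      * destruct (H z Hz) as [?|H']; auto. right. intros m. eapply Rle_trans. apply Rmin_l. auto.
Qed.

Lemma sep_span a t N : exists d, 0 < d /\ forall x y, in_bounded_span a t N x ->
  in_bounded_span a t N y -> forall m, Rabs (x - y - IZR m) < d -> exists n, x - y = IZR n.
Proof. destruct (span_finite a t N) as [l Hl].
  destruct (sep_list (flat_map (fun x => map (fun y => x - y) l) l)) as [d [Hd H]].
  exists d. split; auto. intros x y Hx Hy m Hm.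
  destruct (H (x - y)) as [?|H']; auto.
  - apply in_flat_map. exists x. split; auto. apply in_map_iff. exists y; auto.
  - specialize (H' m). lra.
Qed.

Lemma int_limit y k (r : nat -> R) : (forall t, (k <= t)%nat -> r t <= / INR (S t)) ->
  (forall t, (k <= t)%nat -> exists m, Rabs (y - IZR m) < r t) -> exists n, y = IZR n.
Proof. intros Hr H. destruct (sep_single y) as [?|[d [Hd Hy]]]; auto.
  destruct (archimed_cor1 d Hd) as [n [Hn Hn0]].
  destruct (H (n + k)%nat ltac:(lia)) as [m Hm]. specialize (Hr (n+k)%nat ltac:(lia)).
  specialize (Hy m). exfalso.
  assert (/ INR (S (n + k)) <= / INR n).
  { apply Rinv_le_contravar. apply lt_0_INR; lia. apply le_INR; lia. }
  lra.
Qed.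
Fixpoint Nsum (M : nat -> nat) (t : nat) : nat :=
  match t with O => 1%nat | S t' => (Nsum M t' + M (S t'))%nat end.

Lemma Nsum_mono M t t' : (t <= t')%nat -> (Nsum M t <= Nsum M t')%nat.
Proof. induction 1; simpl; lia. Qed.
Lemma Nsum_ge M t : (1 <= t)%nat -> (M t <= Nsum M t)%nat.
Proof. destruct t; simpl; lia. Qed.
Lemma Nsum_pos M t : (1 <= Nsum M t)%nat.
Proof. induction t; simpl; lia. Qed.

Theorem lemma5 (alpha : nat -> R) (M : nat -> nat) :
  is_subgroup_T alpha ->
  (forall t, (1 <= t)%nat -> (0 < M t)%nat) ->
  exists V : nat -> R -> Prop,
    (forall t, (1 <= t)%nat -> Zperiodic (V t) /\ open_set (V t)) /\
    (forall t, (1 <= t)%nat -> forall x, in_bounded_span alpha t (M t) x -> V t x) /\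
    (forall x : R,
       (exists k : nat, (1 <= k)%nat /\ forall t, (k <= t)%nat -> V t x)
       <-> in_G alpha x).
Proof.
  intros HG HM.
  set (N := Nsum M).
  pose (Hd := fun t => constructive_indefinite_description _ (sep_span alpha t (N t))).
  set (d := fun t => proj1_sig (Hd t)).
  assert (Hdp : forall t, 0 < d t /\ forall x y, in_bounded_span alpha t (N t) x ->
    in_bounded_span alpha t (N t) y -> forall m, Rabs (x - y - IZR m) < d t -> exists n, x - y = IZR n).
  { intros t. exact (proj2_sig (Hd t)). }
  clearbody d. clear Hd.
  set (r := fun t => Rmin (Rmin (d t) (d (S t)) / 3) (/ INR (S t))).
  assert (Hr0 : forall t, 0 < r t).
  { intros t. unfold r. apply Rmin_glb_lt. 
    assert (0 < Rmin (d t) (d (S t))) by (apply Rmin_glb_lt; apply Hdp). lra.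
    apply Rinv_0_lt_compat, lt_0_INR; lia. }
  assert (Hr1 : forall t, r t <= d (S t) / 3).
  { intros t. unfold r. eapply Rle_trans. apply Rmin_l. pose proof (Rmin_r (d t) (d (S t))). lra. }
  assert (Hr2 : forall t, r (S t) <= d (S t) / 3).
  { intros t. unfold r. eapply Rle_trans. apply Rmin_l. pose proof (Rmin_l (d (S t)) (d (S (S t)))). lra. }
  assert (Hr4 : forall t, r t <= d t / 3).
  { intros t. unfold r. eapply Rle_trans. apply Rmin_l. pose proof (Rmin_l (d t) (d (S t))). lra. }
  assert (Hr3 : forall t, r t <= / INR (S t)) by (intros; apply Rmin_r).
  clearbody r.
  exists (fun t x => exists g, in_bounded_span alpha t (N t) g /\ exists m, Rabs (x - g - IZR m) < r t).
  split; [|split].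
  - intros t _. split.
    + intros x z. split.
      * intros [g [Hg [m Hm]]]. exists g. split; auto. exists (m + z)%Z.
        rewrite plus_IZR. replace (x + IZR z - g - (IZR m + IZR z)) with (x - g - IZR m) by ring. auto.
      * intros [g [Hg [m Hm]]]. exists g. split; auto. exists (m - z)%Z.
        rewrite minus_IZR. replace (x - g - (IZR m - IZR z)) with (x + IZR z - g - IZR m) by ring. auto.
    + intros x [g [Hg [m Hm]]].
      assert (Hp : 0 < r t - Rabs (x - g - IZR m)) by lra.
      exists (mkposreal _ Hp). intros y Hy. unfold disc in Hy; simpl in Hy.
      exists g. split; auto. exists m.
      replace (y - g - IZR m) with ((y - x) + (x - g - IZR m)) by ring.
      eapply Rle_lt_trans. apply Rabs_triang. lra.
  - intros t Ht x Hx. exists x. split.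
    + eapply span_mono; eauto. apply Nsum_ge; auto.
    + exists 0%Z. replace (x - x - IZR 0) with 0 by (simpl; ring). rewrite Rabs_R0. auto.
  - intros x. split.
    + intros [k [Hk H]].
      destruct (H k (le_n k)) as [g0 [Hg0 [m0 Hm0]]].
      assert (Hc : forall j g, in_bounded_span alpha (k + j)%nat (N (k + j)%nat) g ->
                (exists m, Rabs (x - g - IZR m) < r (k + j)%nat) -> exists n, g - g0 = IZR n).
      { induction j; intros g' Hg' [m' Hm'].
        - rewrite Nat.add_0_r in *.
          destruct (proj2 (Hdp k) g' g0 Hg' Hg0 (m0 - m')%Z) as [n Hn].
          + rewrite minus_IZR.
            replace (g' - g0 - (IZR m0 - IZR m')) with ((x - g0 - IZR m0) - (x - g' - IZR m')) by ring.
            eapply Rle_lt_trans. apply Rabs_triang. rewrite Rabs_Ropp.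
            pose proof (Hr4 k). assert (0 < d k) by apply Hdp. lra.
          + exists n; auto.
        - destruct (H (k + j)%nat ltac:(lia)) as [g [Hg [m Hm]]].
          destruct (IHj g Hg (ex_intro _ m Hm)) as [n Hn].
          replace (k + S j)%nat with (S (k + j)) in * by lia.
          destruct (proj2 (Hdp (S (k + j))) g g') with (m := (m' - m)%Z) as [n' Hn'].
          + eapply span_mono; eauto. apply Nsum_mono; lia.
          + auto.
          + rewrite minus_IZR.
            replace (g - g' - (IZR m' - IZR m)) with ((x - g' - IZR m') - (x - g - IZR m)) by ring.
            eapply Rle_lt_trans. apply Rabs_triang. rewrite Rabs_Ropp.
            pose proof (Hr1 (k + j)%nat). pose proof (Hr2 (k + j)%nat).
            assert (0 < d (S (k + j))) by apply Hdp. lra.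
          + exists (n - n')%Z. rewrite minus_IZR. lra. }
      destruct (int_limit (x - g0) k r) as [n0 Hn0].
      * intros; auto.
      * intros t Ht. destruct (H t Ht) as [g [Hg [m Hm]]].
        replace t with (k + (t - k))%nat in Hg, Hm by lia.
        destruct (Hc (t - k)%nat g Hg (ex_intro _ m Hm)) as [n Hn].
        replace (k + (t - k))%nat with t in Hm by lia.
        exists (m + n)%Z. rewrite plus_IZR.
        replace (x - g0 - (IZR m + IZR n)) with (x - g - IZR m) by lra. auto.
      * replace x with (g0 + IZR n0) by lra. apply in_G_shift.
        destruct Hg0 as [kk [_ ->]]. apply lin_comb_in_G; auto.
    + intros [s [Hs [m Hm]]]. exists s. split; auto. intros t Ht.
      exists (alpha s). split.
      * apply span_single. lia. apply Nsum_pos.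
      * exists m. replace (x - alpha s - IZR m) with 0 by lra. rewrite Rabs_R0. auto.
Qed.
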